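(* Let $Q$ be a convex polytope in $\mathbb{R}^D$ with vertices in $\mathbb{Z}^D$, let $E$ be an edge of $Q$, and let $A\subset L(Q)$. Suppose $A\cap E = T_E(S)$, where $S\subset\mathbb{Z}$ and $T_E:\mathbb{R}\to\mathbb{R}^D$ is an injective affine transformation. Then there exists an injective affine transformation $T_{E+E}:\mathbb{R}\to\mathbb{R}^D$ such that $$(A+A)\cap (E+E) = T_{E+E}(S+S).$$
   Context: $L(Q) = Q\cap\mathbb{Z}^D$. For sets $X,Y$, $X+Y=\{x+y: x\in X,y\in Y\}$ (Minkowski sum). *)

(* Defs.v *)
From mathcomp Require Import all_boot all_order all_algebra.
From mathcomp Require Import boolp classical_sets reals.
Set Implicit Arguments. Unset Strict Implicit. Unset Printing Implicit Defensive.
Import Order.TTheory GRing.Theory Num.Theory.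
Local Open Scope ring_scope.
Local Open Scope classical_set_scope.

Section Defs.
Variable R : realType.
Variable D : nat.
Notation vec := 'rV[R]_D.

Definition dotv (x y : vec) : R := \sum_(i < D) x ord0 i * y ord0 i.

Definition lattice_pt (x : vec) : Prop := forall i : 'I_D, x ord0 i \is a Num.int.

Definition conv (V : seq vec) : set vec :=
  [set x | exists l : 'I_(size V) -> R,
     (forall i, 0 <= l i) /\ \sum_(i < size V) l i = 1 /\
     x = \sum_(i < size V) l i *: V`_i].

Definition lattice_polytope (Q : set vec) : Prop :=
  exists V : seq vec, (forall v, v \in V -> lattice_pt v) /\ Q = conv V.

Definition is_edge (Q E : set vec) : Prop :=
  (exists c : vec, E = [set x | Q x /\ forall y, Q y -> dotv c y <= dotv c x]) /\
  (exists u v : vec, u != v /\ E = conv [:: u; v]).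

Definition Lpts (Q : set vec) : set vec := [set x | Q x /\ lattice_pt x].

Definition affine_inj (T : R -> vec) : Prop :=
  (exists p w : vec, forall t, T t = p + t *: w) /\ injective T.

End Defs.

Definition sumset (V : zmodType) (X Y : set V) : set V :=
  [set z | exists x y, X x /\ Y y /\ z = x + y].

(* Main.v *)
Require Import Defs.
From mathcomp Require Import all_boot all_order all_algebra.
From mathcomp Require Import boolp classical_sets reals.
Import Order.TTheory GRing.Theory Num.Theory.
Local Open Scope ring_scope.
Local Open Scope classical_set_scope.

Lemma dotvD (R : realType) (D : nat) (c a b : 'rV[R]_D) :
  dotv c (a + b) = dotv c a + dotv c b.
Proof.
rewrite /dotv -big_split /=; apply: eq_bigr => i _; by rewrite mxE mulrDr.
Qed.

Theorem lemma4 (R : realType) (D : nat) (Q E A : set 'rV[R]_D) (S : set int)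
    (TE : R -> 'rV[R]_D) :
  lattice_polytope Q -> is_edge Q E -> A `<=` Lpts Q ->
  affine_inj TE ->
  A `&` E = TE @` ((fun s : int => s%:~R : R) @` S) ->
  exists TEE : R -> 'rV[R]_D, affine_inj TEE /\
    sumset A A `&` sumset E E = TEE @` ((fun s : int => s%:~R : R) @` sumset S S).
Proof.
move=> _ [[c Ec] _] AQ [[p [w TEd]] TEinj] AE.
have inE : forall a1 a2 e1 e2, A a1 -> A a2 -> E e1 -> E e2 ->
    a1 + a2 = e1 + e2 -> E a1 /\ E a2.
  move=> a1 a2 e1 e2 Aa1 Aa2; rewrite Ec /= => -[Qe1 He1] [Qe2 He2] Heq.
  have Qa1 := (AQ _ Aa1).1; have Qa2 := (AQ _ Aa2).1.
  have h1 := He1 _ Qa1; have h2 := He2 _ Qa2.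
  have hs : dotv c a1 + dotv c a2 = dotv c e1 + dotv c e2 by rewrite -!dotvD Heq.
  have q1 : dotv c a1 = dotv c e1.
    apply/eqP; rewrite eq_le h1 /=.
    by rewrite -(lerD2r (dotv c a2)) hs lerD2l.
  have q2 : dotv c a2 = dotv c e2.
    apply/eqP; rewrite eq_le h2 /=.
    by rewrite -(lerD2l (dotv c a1)) hs lerD2r.
  by split; split=> // y Qy; [rewrite q1; apply: He1 | rewrite q2; apply: He2].
exists (fun t => (p + p) + t *: w); split.
  split; first by exists (p + p), w.
  move=> t1 t2 /= h; apply: TEinj; rewrite !TEd.
  by apply: (addrI p); rewrite !addrA.
have TEsum : forall s1 s2 : int, TE s1%:~R + TE s2%:~R = (p + p) + (s1 + s2)%:~R *: w.
  move=> s1 s2; rewrite !TEd intrD scalerDl.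
  by rewrite addrACA.
apply/seteqP; split.
- move=> z [[a1 [a2 [Aa1 [Aa2 ->]]]] [e1 [e2 [Ee1 [Ee2 He]]]]].
  have [Ea1 Ea2] := inE _ _ _ _ Aa1 Aa2 Ee1 Ee2 He.
  have : (A `&` E) a1 by [].
  rewrite AE => -[t1 [s1 Ss1 <-] <-].
  have : (A `&` E) a2 by [].
  rewrite AE => -[t2 [s2 Ss2 <-] <-].
  exists (s1 + s2)%:~R; first by exists (s1 + s2) => //; exists s1, s2.
  by rewrite TEsum.
- move=> z [t [s [s1 [s2 [Ss1 [Ss2 ->]]]] <-] <-].
  have h1 : (A `&` E) (TE s1%:~R) by rewrite AE; exists s1%:~R => //; exists s1.
  have h2 : (A `&` E) (TE s2%:~R) by rewrite AE; exists s2%:~R => //; exists s2.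
  rewrite -TEsum; split.
  + by exists (TE s1%:~R), (TE s2%:~R); case: h1; case: h2.
  + by exists (TE s1%:~R), (TE s2%:~R); case: h1; case: h2.
Qed.
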